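(* Let $\Gamma$ be a compact and connected metric graph. (i) A vector bundle $E$ of rank $n$ on $\Gamma$ is isomorphic to $E(\lambda)$ for some $S_n\ltimes\mathbb{R}^n$-local system $\lambda$ if and only if $E$ is semistable and of degree zero. Moreover, $E(\lambda)$ is stable if and only if the representation $\pi_1(\Gamma)\to S_n$ associated to $\lambda$ is indecomposable. (ii) Two $S_n\ltimes\mathbb{R}^n$-local systems $\lambda_1,\lambda_2$ give rise to isomorphic vector bundles $E(\lambda_1)\simeq E(\lambda_2)$ if and only if they define the same cover $f:\widetilde\Gamma\to\Gamma$ and the classes of the induced $\mathbb{R}$-local systems $\widetilde\lambda_1,\widetilde\lambda_2$ in $\mathrm{Jac}(\widetilde\Gamma)$ are equal.
   Context: Metric graphs, piecewise linear functions with integer slopes, divisors, $\mathrm{div}$, and the sheaf $\mathcal{H}_\Gamma$ of harmonic functions (piecewise linear functions $f$ with $\mathrm{div}(f)=0$, i.e. affine with integer slope along edges and with outgoing slopes summing to zero at every point) are as usual in tropical geometry. A vector bundle of rank $n$ on $\Gamma$ is a torsor under the sheaf of groups $S_n\ltimes\mathcal{H}_\Gamma^n$; with respect to an oriented simple model and its star cover it is given by transition data $(\sigma^e,g^e_1,\dots,g^e_n)$ on edges $e$ ($\sigma^e\in S_n$, $g^e_i$ affine with integer slope), viewed as a matrix over $\mathbb{T}=\mathbb{R}\cup\{\infty\}$ with finite entries $g^e_{i\sigma^e(i)}=g^e_i$. Its degree is the sum over edges of the slopes of all finite entries; its slope is $\mu(E)=\deg E/\mathrm{rk}\,E$. A rank-$m$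 bundle $F$ is a subbundle of $E$ if transition data can be chosen so that each transition matrix of $E$ has the block form $\begin{bmatrix} h^e & \ast\\ \infty & \ast\end{bmatrix}$ with $h^e$ the transition matrix of $F$. $E$ is semistable if $\mu(F)\le\mu(E)$ for all subbundles $F$, stable if the inequality is strict for proper nonzero subbundles. The constant functions give a subsheaf $\mathbb{R}\subset\mathcal{H}_\Gamma$ and hence a subsheaf $S_n\ltimes\mathbb{R}^n\subset S_n\ltimes\mathcal{H}^n_\Gamma$. An $S_n\ltimes\mathbb{R}^n$-local system $\lambda$ is a torsor under this locally constant sheaf; $E(\lambda)$ is the vector bundle obtained by extension of structure sheaf (a vector bundle with constant transition functions). The $S_n$-part of $\lambda$ gives a representation $\pi_1(\Gamma)\to S_n$ (up to conjugacy) and thus a free cover $f:\widetilde\Gamma\to\Gamma$ of degree $n$ (isometric covering map, $\widetilde\Gamma$ possibly disconnected), and there is an $\mathbb{R}$-local system $\widetilde\lambda$ on $\widetilde\Gamma$ with $f_\ast\widetilde\lambda=\lambda$; both are unique up to isomorphism. The representation is called indecomposable if it is transitive on $\{1,\dots,n\}$. The sheaf $\Omega_{\widetilde\Gamma}$ of harmonic $1$-forms is defined by the exact sequence $0\to\mathbb{R}\to\mathcal{H}_{\widetilde\Gamma}\to\Omega_{\widetilde\Gamma}\to0$, and $\mathrm{Jac}(\widetilde\Gamma)=H^1(\widetilde\Gamma,\mathbb{R})/\Omega_{\widetilde\Gamma}(\widetilde\Gamma)$, the quotient by the image of the connecting homomorphism; the class of $\widetilde\lambda$ is the image of its class in $H^1(\widetilde\Gamma,\mathbb{R})$.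 *)

(* Defs.v *)
From HB Require Import structures.
From mathcomp Require Import all_boot all_order all_algebra all_fingroup.
From mathcomp Require Import reals.
Set Implicit Arguments. Unset Strict Implicit. Unset Printing Implicit Defensive.
Import Order.TTheory GRing.Theory Num.Theory.
Local Open Scope ring_scope.

(* A compact metric graph, given by an oriented model: finite vertex  *)
(* and edge sets, each edge e identified with [0, len e], tail at 0.  *)
Record model (R : Type) := Model {
  V : finType; Ed : finType;
  tl : Ed -> V; hd : Ed -> V;
  len : Ed -> R }.

Section Defs.
Variable R : realType.
Variable G : model R.
Notation V := (V G). Notation Ed := (Ed G).
Notation tl := (@tl R G). Notation hd := (@hd R G). Notation len := (@len R G).

Definition adjacent : rel V :=
  fun x y => [exists e : Ed, ((tl e == x) && (hd e == y)) || ((tl e == y) && (hd e == x))].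

Definition simple_connected_model : Prop :=
  [/\ (0 < #|V|)%N,
      (forall e, 0 < len e),
      (forall e, tl e != hd e),
      (forall e e', ((tl e == tl e') && (hd e == hd e')) || ((tl e == hd e') && (hd e == tl e'))
                     -> e = e')
    & (forall x y, connect adjacent x y)].

Variable n : nat.

(* Transition data of a rank-n vector bundle w.r.t. the star cover:    *)
(* on edge e the (tropical, monomial) transition matrix has the finite *)
(* entry at (i, tperm e i), equal to the affine function               *)
(*      t |-> toff e i + (tslp e i) * t ,  t in [0, len e].            *)
Record tdata := TData {
  tperm : Ed -> {perm 'I_n};
  toff : Ed -> 'I_n -> R;
  tslp : Ed -> 'I_n -> int }.

(* A section of S_n ⋉ H^n over the star of each vertex v:             *)
(* a permutation gperm v, and for each i a harmonic function on the    *)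
(* star, given by its value gval v i at v and its integer outgoing     *)
(* slopes gslp v e i along the incident edges e.                       *)
Record gauge := Gauge {
  gperm : V -> {perm 'I_n};
  gval : V -> 'I_n -> R;
  gslp : V -> Ed -> 'I_n -> int }.

Definition harmonic_gauge (P : gauge) : Prop :=
  forall v i, \sum_(e : Ed | (tl e == v) || (hd e == v)) gslp P v e i = 0.

(* restriction to edge e (coordinate t in [0,len e]) of the harmonic    *)
(* function (v,i) of P : offset and slope of the affine function        *)
Definition roff (P : gauge) v e i : R :=
  if tl e == v then gval P v i else gval P v i + (gslp P v e i)%:~R * len e.
Definition rslp (P : gauge) v e i : int :=
  if tl e == v then gslp P v e i else - gslp P v e i.

(* Isomorphism of bundles: A' ⊙ P_(hd e) = P_(tl e) ⊙ A on every edge   *)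
(* (product of monomial tropical matrices written out).                 *)
Definition bundle_iso (A A' : tdata) : Prop :=
  exists P : gauge, harmonic_gauge P /\
   forall e, [/\ (tperm A' e * gperm P (hd e))%g = (gperm P (tl e) * tperm A e)%g,
     (forall i, toff A' e i + roff P (hd e) e (tperm A' e i)
                = roff P (tl e) e i + toff A e (gperm P (tl e) i))
   & (forall i, tslp A' e i + rslp P (hd e) e (tperm A' e i)
                = rslp P (tl e) e i + tslp A e (gperm P (tl e) i))].

Definition deg (A : tdata) : int := \sum_(e : Ed) \sum_(i : 'I_n) tslp A e i.
Definition mu (A : tdata) : rat := (deg A)%:~R / n%:R.

(* S_n ⋉ R^n local systems: constant transition data *)
Record ldata := LData {
  lperm : Ed -> {perm 'I_n};
  lconst : Ed -> 'I_n -> R }.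

Definition bundle_of_ls (l : ldata) : tdata :=
  TData (lperm l) (lconst l) (fun _ _ => 0).

Definition step_src (s : Ed * bool) := if s.2 then tl s.1 else hd s.1.
Definition step_dst (s : Ed * bool) := if s.2 then hd s.1 else tl s.1.

Fixpoint walk_end (u : V) (w : seq (Ed * bool)) : option V :=
  match w with
  | [::] => Some u
  | s :: w' => if step_src s == u then walk_end (step_dst s) w' else None
  end.

Definition step_perm (l : ldata) (s : Ed * bool) : {perm 'I_n} :=
  if s.2 then lperm l s.1 else ((lperm l s.1)^-1)%g.

(* monodromy along a walk: (p * q) x = q (p x), so steps act in order *)
Definition monodromy (l : ldata) (w : seq (Ed * bool)) : {perm 'I_n} :=
  foldr (fun s acc => (step_perm l s * acc)%g) 1%g w.

(* the representation pi_1(Gamma, v0) -> S_n is transitive on {1..n} *)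
Definition indecomposable (l : ldata) : Prop :=
  forall (v0 : V) (i j : 'I_n), exists w, walk_end v0 w = Some v0 /\ monodromy l w i = j.

End Defs.

Arguments TData {R G n}.

Section Defs2.
Variable R : realType.
Variable G : model R.
Notation V := (V G). Notation Ed := (Ed G).
Notation tl := (@tl R G). Notation hd := (@hd R G). Notation len := (@len R G).

(* F (rank m) is a subbundle of E (rank n): representatives E', F' can  *)
(* be chosen with E' = [[F', *], [oo, *]] blockwise on every edge.      *)
Definition subbundle (m n : nat) (F : tdata G m) (E : tdata G n) : Prop :=
  (m <= n)%N /\
  exists (E' : tdata G n) (F' : tdata G m),
   [/\ bundle_iso E E', bundle_iso F F' &
   forall e : Ed,
    (forall j : 'I_n, (m <= j)%N -> (m <= tperm E' e j)%N) /\
    (forall (i : 'I_m) (j : 'I_n), val i = val j ->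
       [/\ val (tperm E' e j) = val (tperm F' e i),
           toff E' e j = toff F' e i & tslp E' e j = tslp F' e i])].

Definition semistable (n : nat) (E : tdata G n) : Prop :=
  forall (m : nat) (F : tdata G m), (0 < m)%N -> subbundle F E -> (mu F <= mu E)%R.

Definition stable (n : nat) (E : tdata G n) : Prop :=
  forall (m : nat) (F : tdata G m), (0 < m)%N -> (m < n)%N -> subbundle F E ->
    (mu F < mu E)%R.

(* The cover of l: vertices V x 'I_n, edges Ed x 'I_n, edge (e,i) going  *)
(* from (tl e, i) to (hd e, lperm l e i), same lengths.  The R-local     *)
(* system l~ has the constant lconst l e i on the edge (e,i).            *)

Definition cover_iso (n : nat) (l1 l2 : ldata G n) (tau : V -> {perm 'I_n}) : Prop :=
  forall e, (tau (tl e) * lperm l2 e)%g = (lperm l1 e * tau (hd e))%g.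

(* Omega(Gamma~)(Gamma~): integer harmonic 1-forms = integer flows on the *)
(* cover satisfying Kirchhoff's law at every vertex (v,j).              *)
Definition cover_int_flow (n : nat) (l : ldata G n) (m : Ed -> 'I_n -> int) : Prop :=
  forall (v : V) (j : 'I_n),
    \sum_(e : Ed | tl e == v) m e j =
    \sum_(e : Ed | hd e == v) \sum_(i : 'I_n | lperm l e i == j) m e i.

(* Equality in Jac(Gamma~) = H^1(Gamma~,R) / Omega(Gamma~)(Gamma~) of the   *)
(* classes of two R-cocycles c, c' (constants on the cover edges):        *)
(* H^1 = R^{edges}/coboundaries, and the connecting map sends a flow m    *)
(* to the cocycle (e,i) |-> len e * m e i.                                *)
Definition jac_eq (n : nat) (l : ldata G n) (c c' : Ed -> 'I_n -> R) : Prop :=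
  exists (a : V -> 'I_n -> R) (m : Ed -> 'I_n -> int),
    cover_int_flow l m /\
    forall e i, c e i - c' e i = a (hd e) (lperm l e i) - a (tl e) i + (m e i)%:~R * len e.

Definition same_cover_same_jac (n : nat) (l1 l2 : ldata G n) : Prop :=
  exists tau : V -> {perm 'I_n}, cover_iso l1 l2 tau /\
    jac_eq l1 (lconst l1) (fun e i => lconst l2 e (tau (tl e) i)).

End Defs2.

(* Main.v *)
Require Import Defs.
From HB Require Import structures.
From mathcomp Require Import all_boot all_order all_algebra all_fingroup.
From mathcomp Require Import reals.
From mathcomp Require Import zify ring lra.
Import Defs.
Set Implicit Arguments. Unset Strict Implicit. Unset Printing Implicit Defensive.
Import Order.TTheory GRing.Theory Num.Theory.
Local Open Scope ring_scope.

Section Aux.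
Variables (R : realType) (G : model R) (n : nat).
Local Notation tl := (@tl R G).
Local Notation hd := (@hd R G).
Local Notation len := (@len R G).

Definition invD (s : Ed G -> {perm 'I_n}) (D : V G -> pred 'I_n) :=
  forall e i, D (tl e) i = D (hd e) (s e i).
Definition degD (A : tdata G n) (D : V G -> pred 'I_n) : int :=
  \sum_(e : Ed G) \sum_(i | D (tl e) i) tslp A e i.

Lemma gauge_inv (A A' : tdata G n) (P : gauge G n) D D' :
  (forall e, (tperm A' e * gperm P (hd e))%g = (gperm P (tl e) * tperm A e)%g) ->
  (forall v i, D' v i = D v (gperm P v i)) ->
  invD (tperm A) D <-> invD (tperm A') D'.
Proof.
move=> Hp HD.
have key e i : gperm P (hd e) (tperm A' e i) = tperm A e (gperm P (tl e) i).
  by rewrite -permM Hp permM.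
split=> H e i.
  by rewrite !HD key H.
have := H e ((gperm P (tl e))^-1%g i).
by rewrite !HD key !permKV.
Qed.

Lemma sum_split_or (T : finType) (a b : pred T) (F : T -> int) :
  (forall x, ~~ (a x && b x)) ->
  \sum_(x | a x || b x) F x = \sum_(x | a x) F x + \sum_(x | b x) F x.
Proof.
move=> Hab; rewrite big_mkcond [X in _ = X + _]big_mkcond [X in _ = _ + X]big_mkcond -big_split /=.
apply: eq_bigr => x _; have := Hab x.
by case: (a x); case: (b x); rewrite /= ?addr0 ?add0r.
Qed.

Lemma sum_by_tl (F : V G -> Ed G -> int) :
  \sum_(e : Ed G) F (tl e) e = \sum_(v : V G) \sum_(e | tl e == v) F v e.
Proof.
rewrite (partition_big tl predT) //.
apply: eq_bigr => v _; apply: eq_bigr => e /eqP <-. by [].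
Qed.

Lemma sum_by_hd (F : V G -> Ed G -> int) :
  \sum_(e : Ed G) F (hd e) e = \sum_(v : V G) \sum_(e | hd e == v) F v e.
Proof.
rewrite (partition_big hd predT) //.
apply: eq_bigr => v _; apply: eq_bigr => e /eqP <-. by [].
Qed.

Lemma harm_zero (P : gauge G n) (D' : V G -> pred 'I_n) :
  (forall e, tl e != hd e) -> harmonic_gauge P ->
  \sum_(e : Ed G) (\sum_(i | D' (tl e) i) gslp P (tl e) e i
                  + \sum_(i | D' (hd e) i) gslp P (hd e) e i) = 0.
Proof.
move=> Hl Hh.
rewrite big_split /=.
rewrite (sum_by_tl (fun v e => \sum_(i | D' v i) gslp P v e i)).
rewrite (sum_by_hd (fun v e => \sum_(i | D' v i) gslp P v e i)).
rewrite -big_split /=; apply: big1 => v _.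
rewrite exchange_big [X in _ + X]exchange_big /=.
rewrite -big_split /=; apply: big1 => i _.
rewrite -sum_split_or; first exact: Hh.
move=> e; apply/negP => /andP [/eqP H1 /eqP H2].
by move: (Hl e); rewrite H1 H2 eqxx.
Qed.

Lemma gauge_deg (A A' : tdata G n) (P : gauge G n) D D' :
  (forall e, tl e != hd e) -> harmonic_gauge P ->
  (forall e, (tperm A' e * gperm P (hd e))%g = (gperm P (tl e) * tperm A e)%g) ->
  (forall e i, tslp A' e i + rslp P (hd e) e (tperm A' e i)
                = rslp P (tl e) e i + tslp A e (gperm P (tl e) i)) ->
  (forall v i, D' v i = D v (gperm P v i)) ->
  invD (tperm A') D' -> degD A D = degD A' D'.
Proof.
move=> Hl Hh Hp Hs HD Hinv.
have E1 e : \sum_(i | D' (tl e) i) tslp A' e i + \sum_(k | D' (hd e) k) rslp P (hd e) e k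
   = \sum_(i | D' (tl e) i) rslp P (tl e) e i + \sum_(k | D (tl e) k) tslp A e k.
  have -> : \sum_(k | D' (hd e) k) rslp P (hd e) e k
        = \sum_(i | D' (tl e) i) rslp P (hd e) e (tperm A' e i).
    rewrite (reindex_inj (@perm_inj _ (tperm A' e))) /=.
    by apply: eq_bigl => i; rewrite Hinv.
  have -> : \sum_(k | D (tl e) k) tslp A e k
        = \sum_(i | D' (tl e) i) tslp A e (gperm P (tl e) i).
    rewrite (reindex_inj (@perm_inj _ (gperm P (tl e)))) /=.
    by apply: eq_bigl => i; rewrite HD.
  rewrite -!big_split /=; apply: eq_bigr => i _; exact: Hs.
have Hz := harm_zero D' Hl Hh.
have E2 : degD A' D' - degD A D =
   \sum_(e : Ed G) (\sum_(i | D' (tl e) i) gslp P (tl e) e i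
                  + \sum_(i | D' (hd e) i) gslp P (hd e) e i).
  rewrite /degD -sumrB; apply: eq_bigr => e _.
  have Ht : \sum_(i | D' (tl e) i) rslp P (tl e) e i = \sum_(i | D' (tl e) i) gslp P (tl e) e i.
    by apply: eq_bigr => i _; rewrite /rslp eqxx.
  have Hd : \sum_(i | D' (hd e) i) rslp P (hd e) e i = - \sum_(i | D' (hd e) i) gslp P (hd e) e i.
    rewrite -sumrN; apply: eq_bigr => i _; rewrite /rslp (negbTE (Hl e)) //.
  move: (E1 e); rewrite Ht Hd.
  set a := \sum_(i | D' (tl e) i) tslp A' e i.
  set b := \sum_(i | D' (hd e) i) gslp P (hd e) e i.
  set c := \sum_(i | D' (tl e) i) gslp P (tl e) e i.
  set d := \sum_(i | D (tl e) i) tslp A e i.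
  move=> H. rewrite -[a](subrK b) H. ring.
move: E2; rewrite Hz => H; lia.
Qed.


Lemma perm_to_set (m : nat) (D : pred 'I_n) : #|D| = m ->
  exists p : {perm 'I_n}, forall i : 'I_n, (i < m)%N = D (p i).
Proof.
move=> Hm.
set s := enum D ++ enum (predC D).
have Hu : perm_eq s (ord_tuple n).
  apply: uniq_perm.
  - rewrite cat_uniq !enum_uniq /= andbT; apply/hasPn => x.
    by rewrite !mem_enum /= => Hx.
  - by rewrite val_ord_tuple enum_uniq.
  - by move=> x; rewrite val_ord_tuple mem_cat !mem_enum /= orbN.
case/tuple_permP: Hu => p Hs; exists p => i.
have Hn : nth (p i) s i = p i.
  rewrite Hs.
  have -> : nth (p i) [tuple tnth (ord_tuple n) (p i0) | i0 < n] i
      = tnth [tuple tnth (ord_tuple n) (p i0) | i0 < n] i by rewrite (tnth_nth (p i)).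
  by rewrite tnth_mktuple tnth_ord_tuple.
rewrite -Hn /s nth_cat.
have -> : size (enum D) = m by rewrite -cardE.
case: ltnP => Hi.
  have Hi2 : (i < size (enum D))%N by rewrite -cardE Hm.
  by move: (mem_nth (p i) Hi2); rewrite mem_enum => H; symmetry; exact: H.
have Hi' : (i - m < size (enum (predC D)))%N.
  rewrite -cardE; have Hc := cardC D; rewrite Hm card_ord in Hc.
  have -> : #|predC D| = #|[predC D]| by apply: eq_card.
  have := ltn_ord i. move: Hc Hi. move: #|[predC D]| => k. move: (nat_of_ord i) => j. lia.
by move: (mem_nth (p i) Hi'); rewrite mem_enum /= => /negbTE ->.
Qed.


Section Restr.
Variables (m : nat) (h : (m <= n)%N) (s : {perm 'I_n}).
Hypothesis Hs : forall i : 'I_n, (i < m)%N -> (s i < m)%N.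
Definition restr_fun (i : 'I_m) : 'I_m := insubd i (val (s (widen_ord h i))).
Lemma restr_val i : val (restr_fun i) = val (s (widen_ord h i)).
Proof. by rewrite val_insubd Hs //= ltn_ord. Qed.
Lemma restr_inj : injective restr_fun.
Proof.
move=> i j /(congr1 val); rewrite !restr_val => /val_inj /perm_inj /(congr1 val) /= H.
exact: val_inj.
Qed.
Definition restr_perm : {perm 'I_m} := perm restr_inj.
Lemma restr_perm_val i : val (restr_perm i) = val (s (widen_ord h i)).
Proof. by rewrite permE restr_val. Qed.
End Restr.

Definition zgauge (p : V G -> {perm 'I_n}) : gauge G n :=
  Gauge p (fun _ _ => 0) (fun _ _ _ => 0).

Lemma zgauge_harm p : harmonic_gauge (zgauge p).
Proof. by move=> v i; rewrite big1. Qed.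
Lemma zgauge_roff p v e i : roff (zgauge p) v e i = 0.
Proof. by rewrite /roff /=; case: ifP => _ //; rewrite mul0r addr0. Qed.
Lemma zgauge_rslp p v e i : rslp (zgauge p) v e i = 0.
Proof. by rewrite /rslp /=; case: ifP => _ //; rewrite oppr0. Qed.

End Aux.

Lemma bundle_iso_refl (R : realType) (G : model R) (n : nat) (A : tdata G n) : bundle_iso A A.
Proof.
exists (zgauge (fun _ => 1%g)); split; first exact: zgauge_harm.
move=> e; split.
- by rewrite mulg1 mul1g.
- by move=> i; rewrite !zgauge_roff perm1 addr0 add0r.
- by move=> i; rewrite !zgauge_rslp perm1 addr0 add0r.
Qed.

Lemma sum_widen (n m : nat) (h : (m <= n)%N) (f : 'I_n -> int) :
  \sum_(i < m) f (widen_ord h i) = \sum_(j < n | (j < m)%N) f j.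
Proof.
case: n f h => [|n'] f h.
  rewrite big1; last by move=> i _; have := ltn_ord i; move: h; move: (nat_of_ord i) => k; lia.
  by rewrite big1 // => -[].
transitivity (\sum_(i < m) f (inord i)).
  apply: eq_bigr => i _; congr f; apply: val_inj; rewrite /= inordK //.
  exact: leq_trans (ltn_ord i) h.
rewrite (big_ord_widen n'.+1 (fun k => f (inord k)) h).
by apply: eq_bigr => j _; rewrite inord_val.
Qed.

Section Aux2.
Variables (R : realType) (G : model R) (n : nat).
Local Notation tl := (@tl R G).
Local Notation hd := (@hd R G).
Local Notation len := (@len R G).

Lemma sub_from_inv (E : tdata G n) (D : V G -> pred 'I_n) (m : nat) (p : V G -> {perm 'I_n}) :
  (forall e, tl e != hd e) -> (m <= n)%N -> invD (tperm E) D ->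
  (forall v (i : 'I_n), (i < m)%N = D v (p v i)) ->
  exists F : tdata G m, subbundle F E /\ deg F = degD E D.
Proof.
move=> Hl h Hinv Hpm.
pose s' := fun e => (p (tl e) * tperm E e * (p (hd e))^-1)%g.
pose E' := @TData R G n s' (fun e i => toff E e (p (tl e) i)) (fun e i => tslp E e (p (tl e) i)).
have Hp e : (tperm E' e * gperm (zgauge p) (hd e))%g = (gperm (zgauge p) (tl e) * tperm E e)%g.
  by rewrite /= /s' -mulgA mulVg mulg1.
have Hs e i : tslp E' e i + rslp (zgauge p) (hd e) e (tperm E' e i)
                = rslp (zgauge p) (tl e) e i + tslp E e (gperm (zgauge p) (tl e) i).
  by rewrite !zgauge_rslp addr0 add0r.
have Hiso : bundle_iso E E'.
  exists (zgauge p); split; first exact: zgauge_harm.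
  move=> e; split; [exact: Hp | | exact: Hs].
  by move=> i; rewrite !zgauge_roff addr0 add0r.
pose D' := fun (v : V G) (i : 'I_n) => (i < m)%N.
have HD' v i : D' v i = D v (gperm (zgauge p) v i) by exact: Hpm.
have Hinv' : invD (tperm E') D' := (gauge_inv Hp HD').1 Hinv.
have Hpres e (i : 'I_n) : (i < m)%N -> (tperm E' e i < m)%N.
  by move: (Hinv' e i); rewrite /D' => ->.
pose F := @TData R G m (fun e => restr_perm h (Hpres e))
   (fun e i => toff E' e (widen_ord h i)) (fun e i => tslp E' e (widen_ord h i)).
exists F; split.
  split => //; exists E', F; split => //; first exact: bundle_iso_refl.
  move=> e; split.
    move=> j Hj; move: (Hinv' e j); rewrite /D' ltnNge Hj /= => /esym/negbT.
    by rewrite -leqNgt.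
  move=> i j Hij; have Hw : widen_ord h i = j by apply: val_inj.
  by split => /=; rewrite ?restr_perm_val Hw.
rewrite (gauge_deg Hl (zgauge_harm p) Hp Hs HD' Hinv') /deg /degD.
apply: eq_bigr => e _ /=; exact: (sum_widen h (tslp E' e)).
Qed.


Lemma conn_const (f : V G -> nat) :
  (forall x y, connect (@adjacent R G) x y) -> (forall e, f (tl e) = f (hd e)) ->
  forall x y, f x = f y.
Proof.
move=> Hc Hf x y; case/connectP: (Hc x y) => p Hp ->.
elim: p x Hp => //= z p IH x /andP [Hxz Hp]; rewrite -(IH z Hp).
case/existsP: Hxz => e /orP [] /andP [/eqP <- /eqP <-] //.
Qed.

Lemma inv_card (s : Ed G -> {perm 'I_n}) D : invD s D -> forall e, #|D (tl e)| = #|D (hd e)|.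
Proof.
move=> Hinv e.
have -> : #|D (tl e)| = #|[preim s e of D (hd e)]|.
  by apply: eq_card => i; rewrite !inE -!topredE /= Hinv.
rewrite card_preim; last exact: perm_inj.
apply: eq_card => i; rewrite !inE /=.
have -> : i \in codom (s e) by rewrite -[i](permKV (s e)) codom_f.
by [].
Qed.

Lemma inv_predC (s : Ed G -> {perm 'I_n}) D : invD s D -> invD s (fun v i => ~~ D v i).
Proof. by move=> H e i; rewrite H. Qed.

Definition pickp (m : nat) (D : pred 'I_n) : {perm 'I_n} :=
  odflt 1%g [pick p : {perm 'I_n} | [forall i : 'I_n, (i < m)%N == D (p i)]].

Lemma pickpP (m : nat) (D : pred 'I_n) : #|D| = m -> forall i : 'I_n, (i < m)%N = D (pickp m D i).
Proof.
move=> Hm; rewrite /pickp; case: pickP => [p /forallP H i | H].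
  by move: (H i) => /= /eqP.
exfalso; case: (perm_to_set Hm) => p Hp.
have : [forall i : 'I_n, (i < m)%N == D (p i)] by apply/forallP => i; rewrite Hp.
by rewrite H.
Qed.

Lemma ss_degD (E : tdata G n) D : simple_connected_model G -> semistable E ->
  invD (tperm E) D -> deg E = 0 -> degD E D <= 0.
Proof.
case=> HV _ Hl _ Hc Hss Hinv Hdeg.
case/card_gt0P: HV => v0 _.
set m := #|D v0|.
have Hm v : #|D v| = m.
  exact: (@conn_const (fun v => #|D v|) Hc (inv_card Hinv) v v0).
have h : (m <= n)%N by rewrite -[n]card_ord max_card.
case: (posnP m) => Hm0.
  rewrite /degD big1 // => e _; rewrite big_pred0 // => i.
  by apply/negbTE/negP => Hi; move: (Hm (tl e)); rewrite Hm0 => /card0_eq /(_ i); rewrite -topredE /= Hi.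
have [F [Hsub HF]] := sub_from_inv Hl h Hinv (fun v => pickpP (Hm v)).
have := Hss m F Hm0 Hsub.
rewrite /mu Hdeg mul0r HF ler_pdivrMr ?ltr0n // mul0r lerz0 //.
Qed.

Lemma ss_degD0 (E : tdata G n) D : simple_connected_model G -> semistable E ->
  invD (tperm E) D -> deg E = 0 -> degD E D = 0.
Proof.
move=> Hm Hss Hinv Hdeg.
have H1 := ss_degD Hm Hss Hinv Hdeg.
have H2 := ss_degD Hm Hss (inv_predC Hinv) Hdeg.
have Hs : degD E D + degD E (fun v i => ~~ D v i) = deg E.
  rewrite /degD /deg -big_split; apply: eq_bigr => e _ /=.
  by rewrite [in RHS](bigID (D (tl e))).
move: H1 H2 Hs; rewrite Hdeg; lia.
Qed.

End Aux2.

Section Flow.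
Variables (W F : finType) (src dst : F -> W).
Definition fdiv (y : F -> int) (w : W) : int :=
  \sum_(f | src f == w) y f - \sum_(f | dst f == w) y f.
Definition fadj : rel W := fun x z =>
  [exists f, ((src f == x) && (dst f == z)) || ((src f == z) && (dst f == x))].
Lemma fadj_sym : symmetric fadj.
Proof.
move=> x z; apply/existsP/existsP => -[f Hf]; exists f; move: Hf; by rewrite orbC.
Qed.
Definition delta (x w : W) : int := if x == w then 1 else 0.

Lemma sum_ind (P : pred F) f :
  \sum_(g | P g && (g == f)) (1 : int) = if P f then 1 else 0.
Proof.
case Pf: (P f).
  rewrite (big_pred1 f) // => g /=; case: eqVneq => [->|_]; by rewrite ?Pf ?andbF.
rewrite big_pred0 // => g; case: eqVneq => [->|_]; by rewrite ?Pf ?andbF.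
Qed.

Lemma fdiv_ind f w : fdiv (fun g => if g == f then 1 else 0) w = delta (src f) w - delta (dst f) w.
Proof. by rewrite /fdiv -!big_mkcondr !sum_ind. Qed.

Lemma fdivD y1 y2 w : fdiv (fun g => y1 g + y2 g) w = fdiv y1 w + fdiv y2 w.
Proof. rewrite /fdiv !big_split /=. ring. Qed.

Lemma fdivN y w : fdiv (fun g => - y g) w = - fdiv y w.
Proof. rewrite /fdiv !sumrN. ring. Qed.

Lemma fdivM c y w : fdiv (fun g => c * y g) w = c * fdiv y w.
Proof. rewrite /fdiv -!mulr_sumr. ring. Qed.

Lemma path_chain x z : connect fadj x z ->
  exists y, forall w, fdiv y w = delta x w - delta z w.
Proof.
case/connectP => p Hp ->; elim: p x Hp => [|a p IH] x /=.
  by move=> _; exists (fun _ => 0) => w; rewrite /fdiv !big1 // !subrr.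
case/andP => Hxa Hp; case: (IH a Hp) => y Hy.
have [y1 Hy1] : exists y1, forall w, fdiv y1 w = delta x w - delta a w.
  case/existsP: Hxa => f /orP [] /andP [/eqP Hs /eqP Hd].
    by exists (fun g => if g == f then 1 else 0) => w; rewrite fdiv_ind Hs Hd.
  exists (fun g => - (if g == f then 1 else 0)) => w; rewrite fdivN fdiv_ind Hs Hd.
  ring.
exists (fun g => y1 g + y g) => w.
rewrite fdivD Hy Hy1; ring.
Qed.

Lemma flow_exists (d : W -> int) :
  (forall w0, \sum_(w | connect fadj w0 w) d w = 0) -> exists y, forall w, fdiv y w = d w.
Proof.
move=> Hd.
have Hsym : connect_sym fadj by apply: sym_connect_sym; exact: fadj_sym.
pose r := fingraph.root fadj.
have Hs : forall s : seq W, exists y, forall u,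
    fdiv y u = \sum_(w <- s) d w * (delta w u - delta (r w) u).
  elim=> [|w s [y Hy]].
    by exists (fun _ => 0) => u; rewrite big_nil /fdiv !big1 // subrr.
  have [y1 Hy1] := path_chain (connect_root fadj w).
  exists (fun g => d w * y1 g + y g) => u.
  by rewrite fdivD fdivM Hy Hy1 big_cons.
have [y Hy] := Hs (enum W).
exists y => u; rewrite Hy big_enum /=.
under eq_bigr do rewrite mulrBr.
rewrite sumrB.
have -> : \sum_(w in W) d w * delta w u = d u.
  rewrite (bigD1 u) //= /delta eqxx mulr1 big1 ?addr0 // => w /negbTE ->.
  by rewrite mulr0.
have -> : \sum_(w in W) d w * delta (r w) u = 0.
  rewrite (eq_bigr (fun w => if r w == u then d w else 0)); last first.
    by move=> w _; rewrite /delta; case: ifP; rewrite ?mulr1 ?mulr0.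
  rewrite -big_mkcond /=.
  case: (pickP (fun w => r w == u)) => [w0 /eqP Hw0 | H0].
    rewrite -[RHS](Hd w0); apply: eq_bigl => w /=.
    by rewrite -Hw0 eq_sym root_connect.
  by rewrite big_pred0.
by rewrite subr0.
Qed.
End Flow.

Section Aux3.
Variables (R : realType) (G : model R) (n : nat).
Local Notation tl := (@tl R G).
Local Notation hd := (@hd R G).
Local Notation len := (@len R G).

Definition csrc (f : Ed G * 'I_n) : V G * 'I_n := (tl f.1, f.2).
Definition cdst (s : Ed G -> {perm 'I_n}) (f : Ed G * 'I_n) : V G * 'I_n := (hd f.1, s f.1 f.2).

Lemma sum_pair (P : Ed G * 'I_n -> bool) (y : Ed G * 'I_n -> int) :
  \sum_(f | P f) y f = \sum_(e : Ed G) \sum_(i | P (e, i)) y (e, i).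
Proof. by rewrite pair_big_dep /=; apply: eq_big => -[e i]. Qed.

Lemma sum_csrc (y : Ed G * 'I_n -> int) v k :
  \sum_(f | csrc f == (v, k)) y f = \sum_(e | tl e == v) y (e, k).
Proof.
rewrite sum_pair [RHS]big_mkcond; apply: eq_bigr => e _ /=.
rewrite /csrc /=; case: eqVneq => He /=.
  by apply: big_pred1 => i; rewrite xpair_eqE He eqxx.
by apply: big_pred0 => i; rewrite xpair_eqE (negbTE He).
Qed.

Lemma sum_cdst s (y : Ed G * 'I_n -> int) v k :
  \sum_(f | cdst s f == (v, k)) y f = \sum_(e | hd e == v) y (e, (s e)^-1%g k).
Proof.
rewrite sum_pair [RHS]big_mkcond; apply: eq_bigr => e _ /=.
rewrite /cdst /=; case: eqVneq => He /=.
  apply: big_pred1 => i; rewrite xpair_eqE He eqxx /=.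
  apply/eqP/eqP => [<-|->]; by rewrite ?permK ?permKV.
by apply: big_pred0 => i; rewrite xpair_eqE (negbTE He).
Qed.


Definition cadj (s : Ed G -> {perm 'I_n}) := fadj csrc (cdst s).

Lemma cadj_sym s : connect_sym (cadj s).
Proof. apply: sym_connect_sym; exact: fadj_sym. Qed.

Lemma cadj_edge s e i : cadj s (tl e, i) (hd e, s e i).
Proof. by apply/existsP; exists (e, i); rewrite /csrc /cdst /= !eqxx. Qed.

Lemma comp_inv s w0 : invD s (fun v k => connect (cadj s) w0 (v, k)).
Proof.
move=> e i /=; apply/idP/idP => H.
  exact: connect_trans H (connect1 (cadj_edge s e i)).
apply: connect_trans H _; rewrite cadj_sym; exact: connect1 (cadj_edge s e i).
Qed.

Lemma ls_from_ss (E : tdata G n) : simple_connected_model G -> semistable E -> deg E = 0 ->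
  exists l : ldata G n, bundle_iso E (bundle_of_ls l).
Proof.
move=> Hm Hss Hdeg.
have Hl : forall e, tl e != hd e by case: Hm.
pose s := tperm E.
pose d := fun w => \sum_(f | cdst s f == w) tslp E f.1 f.2.
have Hd : forall w0, \sum_(w | connect (cadj s) w0 w) d w = 0.
  move=> w0; pose C := fun w => connect (cadj s) w0 w.
  have Hinv := comp_inv s w0.
  rewrite -[RHS](ss_degD0 Hm Hss Hinv Hdeg).
  transitivity (\sum_(f | C (cdst s f)) tslp E f.1 f.2).
    rewrite (partition_big (cdst s) C) //; apply: eq_bigr => w Cw.
    by apply: eq_bigl => f; case: eqVneq => [->|_]; rewrite ?andbF ?andbT // Cw.
  transitivity (\sum_(f | C (csrc f)) tslp E f.1 f.2).
    by apply: eq_bigl => -[e i]; rewrite /C /csrc /cdst /= -Hinv.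
  by rewrite sum_pair.
have [y Hy] := flow_exists Hd.
pose gs := fun v e k => if tl e == v then y (e, k)
                       else - (y (e, (s e)^-1%g k) + tslp E e ((s e)^-1%g k)).
pose P := @Gauge R G n (fun _ => 1%g) (fun _ _ => 0) gs.
pose l := @LData R G n s (fun e i => toff E e i - (gs (hd e) e (s e i))%:~R * len e).
exists l, P; split.
  move=> v k /=; rewrite sum_split_or; last first.
    by move=> e; apply/negP => /andP [/eqP H1 /eqP H2]; move: (Hl e); rewrite H1 H2 eqxx.
  have -> : \sum_(e | tl e == v) gs v e k = \sum_(e | tl e == v) y (e, k).
    by apply: eq_bigr => e He; rewrite /gs He.
  have -> : \sum_(e | hd e == v) gs v e k =
      - (\sum_(e | hd e == v) y (e, (s e)^-1%g k) + \sum_(e | hd e == v) tslp E e ((s e)^-1%g k)).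
    rewrite -big_split -sumrN; apply: eq_bigr => e /eqP He.
    by rewrite /gs -He (negbTE (Hl e)).
  move: (Hy (v, k)); rewrite /fdiv /d sum_csrc !sum_cdst /=.
  move=> H; rewrite -H; ring.
move=> e; split => /=.
- by rewrite mulg1 mul1g.
- move=> i; rewrite /roff /= eqxx (negbTE (Hl e)) perm1; ring.
- move=> i; rewrite /rslp /= eqxx (negbTE (Hl e)) perm1 /gs (negbTE (Hl e)) eqxx permK.
  ring.
Qed.


Lemma degD_all (A : tdata G n) : degD A (fun _ _ => true) = deg A.
Proof. by []. Qed.

Lemma block_inv m (E' : tdata G n) (F' : tdata G m) :
  (forall e : Ed G,
    (forall j : 'I_n, (m <= j)%N -> (m <= tperm E' e j)%N) /\
    (forall (i : 'I_m) (j : 'I_n), val i = val j ->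
       [/\ val (tperm E' e j) = val (tperm F' e i),
           toff E' e j = toff F' e i & tslp E' e j = tslp F' e i])) ->
  invD (tperm E') (fun _ j => (j < m)%N).
Proof.
move=> Hb e j /=; case: (ltnP j m) => Hj.
  have [_ H2] := Hb e; have [-> _ _] := H2 (Ordinal Hj) j erefl.
  by rewrite ltn_ord.
have [H1 _] := Hb e; by rewrite ltnNge (H1 j Hj).
Qed.

Lemma deg_block m (h : (m <= n)%N) (E' : tdata G n) (F' : tdata G m) :
  (forall e : Ed G,
    (forall j : 'I_n, (m <= j)%N -> (m <= tperm E' e j)%N) /\
    (forall (i : 'I_m) (j : 'I_n), val i = val j ->
       [/\ val (tperm E' e j) = val (tperm F' e i),
           toff E' e j = toff F' e i & tslp E' e j = tslp F' e i])) ->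
  deg F' = degD E' (fun _ j => (j < m)%N).
Proof.
move=> Hb; rewrite /deg /degD; apply: eq_bigr => e _ /=.
rewrite -(sum_widen h (tslp E' e)); apply: eq_bigr => i _.
have [_ H2] := Hb e; by have [_ _ ->] := H2 i (widen_ord h i) erefl.
Qed.

Lemma iso_deg (A A' : tdata G n) : (forall e, tl e != hd e) -> bundle_iso A A' -> deg A = deg A'.
Proof.
move=> Hl [P [Hh HP]].
rewrite -!degD_all; apply: (gauge_deg (P:=P)) => //.
- by move=> e; case: (HP e).
- by move=> e; case: (HP e).
Qed.

Lemma iso_degD (A A' : tdata G n) D : (forall e, tl e != hd e) -> bundle_iso A A' ->
  invD (tperm A) D ->
  exists D', invD (tperm A') D' /\ degD A D = degD A' D'.
Proof.
move=> Hl [P [Hh HP]] Hinv.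
have Hp : forall e, (tperm A' e * gperm P (hd e))%g = (gperm P (tl e) * tperm A e)%g.
  by move=> e; case: (HP e).
pose D' := fun v i => D v (gperm P v i).
have HD' : forall v i, D' v i = D v (gperm P v i) by [].
have Hinv' := (gauge_inv Hp HD').1 Hinv.
exists D'; split => //; apply: (gauge_deg (P:=P)) => //.
by move=> e; case: (HP e).
Qed.

Lemma iso_degD_back (A A' : tdata G n) D' : (forall e, tl e != hd e) -> bundle_iso A A' ->
  invD (tperm A') D' ->
  exists D, invD (tperm A) D /\ degD A D = degD A' D'.
Proof.
move=> Hl [P [Hh HP]] Hinv'.
have Hp : forall e, (tperm A' e * gperm P (hd e))%g = (gperm P (tl e) * tperm A e)%g.
  by move=> e; case: (HP e).
pose D := fun v k => D' v ((gperm P v)^-1%g k).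
have HD' : forall v i, D' v i = D v (gperm P v i) by move=> v i; rewrite /D permK.
have Hinv := (gauge_inv Hp HD').2 Hinv'.
exists D; split => //; apply: (gauge_deg (P:=P)) => //.
by move=> e; case: (HP e).
Qed.

Lemma degD_ls (l : ldata G n) D : degD (bundle_of_ls l) D = 0.
Proof. by rewrite /degD big1 // => e _; rewrite big1. Qed.

End Aux3.

Lemma part1_fwd (R : realType) (G : model R) (n : nat) (E : tdata G n) : simple_connected_model G ->
  (exists l : ldata G n, bundle_iso E (bundle_of_ls l)) -> semistable E /\ deg E = 0.
Proof.
move=> Hm [l Hl0]; have Hl : forall e : Ed G, tl e != hd e by case: Hm.
have HE : deg E = 0 by rewrite (iso_deg Hl Hl0) -degD_all degD_ls.
split => //.
move=> m F Hm0 [h [E' [F' [HEE' HFF' Hb]]]].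
have HF : deg F = 0.
  rewrite (iso_deg Hl HFF') (deg_block h Hb).
  have [D [HD <-]] := iso_degD_back Hl HEE' (block_inv Hb).
  have [D'' [_ ->]] := iso_degD Hl Hl0 HD.
  exact: degD_ls.
by rewrite /mu HF HE !mul0r.
Qed.


Section Aux4.
Variables (R : realType) (G : model R) (n : nat).
Local Notation tl := (@tl R G).
Local Notation hd := (@hd R G).

Lemma walk_inv (l : ldata G n) D : invD (lperm l) D ->
  forall w v0 v k, walk_end v0 w = Some v -> D v0 k = D v (monodromy l w k).
Proof.
move=> Hinv; elim=> [|[e b] w IH] v0 v k /=.
  by case=> <-; rewrite perm1.
case: eqVneq => // Hs Hw; rewrite permM -(IH _ _ _ Hw).
move: Hs; clear Hw; rewrite /step_src /step_dst /step_perm /=; case: b => /= <-.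
  exact: Hinv.
by rewrite Hinv permKV.
Qed.

Lemma walk_of_conn (l : ldata G n) v0 i v k :
  connect (cadj (lperm l)) (v0, i) (v, k) ->
  exists w, walk_end v0 w = Some v /\ monodromy l w i = k.
Proof.
case/connectP => p Hp Hlast.
suff : exists w, walk_end (v0, i).1 w = Some (last (v0, i) p).1 /\
                 monodromy l w (v0, i).2 = (last (v0, i) p).2.
  by rewrite -Hlast.
elim: p (v0, i) Hp {Hlast} => [|a p IH] x /=.
  by move=> _; exists [::]; rewrite perm1.
case/andP => Hxa Hp; have [w [Hw Hm]] := IH a Hp.
case/existsP: Hxa => -[e j] /orP [] /andP [/eqP Hs /eqP Hd];
  move: Hs Hd; rewrite /csrc /cdst /= => Hs Hd.
  exists ((e, true) :: w) => /=; rewrite /step_src /step_dst /step_perm /= -Hs eqxx /=.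
  subst a x; split => //=; by rewrite permM.
exists ((e, false) :: w) => /=; rewrite /step_src /step_dst /step_perm /= -Hd eqxx /=.
subst a x; split => //=; by rewrite permM permK.
Qed.

End Aux4.

Lemma part2 (R : realType) (G : model R) (n : nat) (l : ldata G n) :
  simple_connected_model G -> stable (bundle_of_ls l) <-> indecomposable l.
Proof.
move=> Hm; have Hl : forall e : Ed G, tl e != hd e by case: Hm.
have [HV _ _ _ Hc] := Hm.
split.
- move=> Hst v0 i j.
  case Hcn: (connect (cadj (lperm l)) (v0, i) (v0, j)).
    exact: walk_of_conn Hcn.
  exfalso.
  pose D := fun v k => connect (cadj (lperm l)) (v0, i) (v, k).
  have Hinv : invD (tperm (bundle_of_ls l)) D := comp_inv (lperm l) (v0, i).
  pose m := #|D v0|.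
  have Hmv v : #|D v| = m by exact: (@conn_const _ _ (fun v => #|D v|) Hc (inv_card Hinv) v v0).
  have h : (m <= n)%N by rewrite -[n]card_ord max_card.
  have Hm0 : (0 < m)%N by apply/card_gt0P; exists i; rewrite -topredE /= /D connect0.
  have Hmn : (m < n)%N.
    have := cardC (D v0); rewrite card_ord.
    have : (0 < #|[predC D v0]|)%N.
      by apply/card_gt0P; exists j; rewrite !inE -topredE /= /D Hcn.
    rewrite -/m; move: #|[predC D v0]| => c; lia.
  have [F [Hsub HF]] := sub_from_inv Hl h Hinv (fun v => pickpP (Hmv v)).
  have := Hst m F Hm0 Hmn Hsub.
  by rewrite /mu HF degD_ls -degD_all degD_ls !mul0r ltxx.
- move=> Hind m F Hm0 Hmn [h [E' [F' [HEE' _ Hb]]]]; exfalso.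
  case: HEE' => P [Hh HP].
  have Hp : forall e, (tperm E' e * gperm P (hd e))%g = (gperm P (tl e) * tperm (bundle_of_ls l) e)%g.
    by move=> e; case: (HP e).
  pose D := fun v k => (((gperm P v)^-1)%g k < m)%N.
  have HD' : forall v (i : 'I_n), (fun _ j => (j < m)%N) v i = D v (gperm P v i).
    by move=> v i; rewrite /D permK.
  have Hinv := (gauge_inv Hp HD').2 (block_inv Hb).
  case/card_gt0P: HV => v0 _.
  pose i := gperm P v0 (Ordinal (ltn_trans Hm0 Hmn)).
  pose j := gperm P v0 (Ordinal Hmn).
  have [w [Hw Hmono]] := Hind v0 i j.
  have := @walk_inv _ _ _ l D Hinv w v0 v0 i Hw.
  by rewrite Hmono /D /i /j !permK /= Hm0 ltnn.
Qed.

Lemma part3 (R : realType) (G : model R) (n : nat) (l1 l2 : ldata G n) :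
  (forall e : Ed G, tl e != hd e) ->
  bundle_iso (bundle_of_ls l1) (bundle_of_ls l2) <-> same_cover_same_jac l1 l2.
Proof.
move=> Hl; split.
- case=> P [Hh HP].
  have key e y : gperm P (hd e) (lperm l2 e y) = lperm l1 e (gperm P (tl e) y).
    by case: (HP e) => Hp _ _; rewrite -permM Hp permM.
  have Hsl e i : gslp P (hd e) e (lperm l2 e i) = - gslp P (tl e) e i.
    case: (HP e) => _ _ /(_ i); rewrite /rslp /= eqxx (negbTE (Hl e)) add0r addr0 => <-.
    by rewrite opprK.
  have Hcov : cover_iso l1 l2 (fun v => (gperm P v)^-1%g).
    move=> e; apply/permP => x; rewrite !permM.
    by apply: (@perm_inj _ (gperm P (hd e))); rewrite key !permKV.
  exists (fun v => (gperm P v)^-1%g); split => //.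
  exists (fun v j => gval P v ((gperm P v)^-1%g j)).
  exists (fun e i => gslp P (hd e) e ((gperm P (hd e))^-1%g (lperm l1 e i))).
  split.
    move=> v j.
    have -> : \sum_(e | hd e == v) \sum_(i | lperm l1 e i == j)
               gslp P (hd e) e ((gperm P (hd e))^-1%g (lperm l1 e i))
            = \sum_(e | hd e == v) gslp P v e ((gperm P v)^-1%g j).
      apply: eq_bigr => e /eqP He.
      rewrite (big_pred1 ((lperm l1 e)^-1%g j)); last first.
        move=> i /=; apply/eqP/eqP => [<-|->]; by rewrite ?permK ?permKV.
      by rewrite permKV He.
    have -> : \sum_(e | tl e == v) gslp P (hd e) e ((gperm P (hd e))^-1%g (lperm l1 e j))
            = - \sum_(e | tl e == v) gslp P v e ((gperm P v)^-1%g j).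
      rewrite -sumrN; apply: eq_bigr => e /eqP He.
      have -> : (gperm P (hd e))^-1%g (lperm l1 e j)
              = lperm l2 e ((gperm P (tl e))^-1%g j).
        by move: (Hcov e) => /permP /(_ j); rewrite !permM.
      by rewrite Hsl He.
    have := Hh v ((gperm P v)^-1%g j); rewrite sum_split_or; last first.
      by move=> e; apply/negP => /andP [/eqP H1 /eqP H2]; move: (Hl e); rewrite H1 H2 eqxx.
    by move=> H; apply/eqP; rewrite eq_sym -addr_eq0 addrC H.
  move=> e i.
  case: (HP e) => _ /(_ ((gperm P (tl e))^-1%g i)) Hoff _.
  move: Hoff; rewrite /roff /= eqxx (negbTE (Hl e)) permKV.
  have -> : lperm l2 e ((gperm P (tl e))^-1%g i)
          = (gperm P (hd e))^-1%g (lperm l1 e i).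
    by move: (Hcov e) => /permP /(_ i); rewrite !permM.
  move=> H; lra.
- case=> tau [Hcov [a [m [Hflow Hc]]]].
  have Hcv e y : lperm l2 e (tau (tl e) y) = tau (hd e) (lperm l1 e y).
    by move: (Hcov e) => /permP /(_ y); rewrite !permM.
  pose P := @Gauge R G n (fun v => (tau v)^-1%g)
     (fun v k => a v ((tau v)^-1%g k))
     (fun v e k => if tl e == v then - m e ((tau v)^-1%g k)
                   else m e ((lperm l1 e)^-1%g ((tau v)^-1%g k))).
  have key e x : (tau (hd e))^-1%g (lperm l2 e x) = lperm l1 e ((tau (tl e))^-1%g x).
    apply: (@perm_inj _ (tau (hd e))); rewrite permKV -Hcv permKV //.
  exists P; split.
    move=> v k /=; rewrite sum_split_or; last first.
      by move=> e; apply/negP => /andP [/eqP H1 /eqP H2]; move: (Hl e); rewrite H1 H2 eqxx.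
    have -> : \sum_(e | tl e == v) (if tl e == v then - m e ((tau v)^-1%g k)
                   else m e ((lperm l1 e)^-1%g ((tau v)^-1%g k)))
            = - \sum_(e | tl e == v) m e ((tau v)^-1%g k).
      by rewrite -sumrN; apply: eq_bigr => e ->.
    have -> : \sum_(e | hd e == v) (if tl e == v then - m e ((tau v)^-1%g k)
                   else m e ((lperm l1 e)^-1%g ((tau v)^-1%g k)))
            = \sum_(e | hd e == v) \sum_(i | lperm l1 e i == (tau v)^-1%g k) m e i.
      apply: eq_bigr => e /eqP He; rewrite -He (negbTE (Hl e)).
      rewrite (big_pred1 ((lperm l1 e)^-1%g ((tau (hd e))^-1%g k))) //.
      move=> i /=; apply/eqP/eqP => [<-|->]; by rewrite ?permK ?permKV.
    by rewrite -Hflow addNr.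
  move=> e; split => /=.
  - apply/permP => x; rewrite !permM; exact: key.
  - move=> i; rewrite /roff /= eqxx (negbTE (Hl e)) key !permK.
    have := Hc e ((tau (tl e))^-1%g i); rewrite permKV => H.
    lra.
  - move=> i; rewrite /rslp /= eqxx (negbTE (Hl e)) key !permK.
    by rewrite add0r addr0.
Qed.

Theorem theorem5p4 (R : realType) (G : model R) (n : nat) :
  simple_connected_model G -> (0 < n)%N ->
  [/\ (forall E : tdata G n,
         (exists l : ldata G n, bundle_iso E (bundle_of_ls l)) <->
         (semistable E /\ deg E = 0%R)),
      (forall l : ldata G n, stable (bundle_of_ls l) <-> indecomposable l)
    & (forall l1 l2 : ldata G n,
         bundle_iso (bundle_of_ls l1) (bundle_of_ls l2) <-> same_cover_same_jac l1 l2)].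
Proof.
move=> Hm Hn; have Hl : forall e : Ed G, tl e != hd e by case: Hm.
split.
- move=> E; split; first exact: part1_fwd.
  by case=> Hss Hdeg; exact: ls_from_ss Hm Hss Hdeg.
- by move=> l; exact: part2.
- by move=> l1 l2; exact: part3.
Qed.
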